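(* Assume that $\mathfrak{c}$ is regular. Let $X$, $Y$ and $Y_\alpha$ ($\alpha\in Y$) be Polish spaces and let $\{f_\alpha:\alpha\in Y\}$ be functions $f_\alpha:X\to Y_\alpha$ such that for all distinct $\alpha,\beta\in Y$: (i) for every $y\in Y_\alpha$, $|f_\alpha^{-1}[\{y\}]|=\mathfrak{c}$; (ii) for every $y\in Y_\alpha$ and $y'\in Y_\beta$, $|f_\alpha^{-1}[\{y\}]\cap f_\beta^{-1}[\{y'\}]|<\mathfrak{c}$. Then there exist $A\subseteq X$ and disjoint Bernstein sets $F,G\subseteq Y$ with $Y=F\cup G$ such that $F=\{\alpha\in Y: f_\alpha[A]=Y_\alpha\}$ and $G=\{\alpha\in Y: f_\alpha[A]$ is a Bernstein set in $Y_\alpha\}$.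
   Context: A subset $S$ of a Polish space $Z$ is a Bernstein set in $Z$ if for every nonempty perfect set $P\subseteq Z$ we have $S\cap P\neq\emptyset$ and $(Z\setminus S)\cap P\neq\emptyset$. *)

(* Defs.v *)
From HB Require Import structures.
From mathcomp Require Import all_boot all_order all_algebra.
From mathcomp Require Import all_classical all_reals all_analysis.
Set Implicit Arguments. Unset Strict Implicit. Unset Printing Implicit Defensive.
Import Order.TTheory GRing.Theory Num.Theory.
Local Open Scope classical_set_scope.

(* The continuum c is the cardinality of a real field R : realType. *)

Definition card_is_c (R : realType) (T : Type) (S : set T) : Prop :=
  card_eq S [set: R].

Definition card_lt_c (R : realType) (T : Type) (S : set T) : Prop :=
  ~ card_le [set: R] S.

(* c is regular: a union of fewer than c sets, each of size < c, has size < c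
   (index sets and members taken, w.l.o.g., inside a set of size c, namely R). *)
Definition continuum_regular (R : realType) : Prop :=
  forall (I : set R) (F : R -> set R),
    card_lt_c R I -> (forall i, I i -> card_lt_c R (F i)) ->
    card_lt_c R (\bigcup_(i in I) F i).

(* Polish space: a separable complete metric space (metric = Hausdorff
   complete pseudometric). *)
Definition separable (T : topologicalType) : Prop :=
  exists D : set T, countable D /\ dense D.

Definition polish (R : realType) (T : completePseudoMetricType R) : Prop :=
  hausdorff_space T /\ separable T.

Definition bernstein (Z : topologicalType) (S : set Z) : Prop :=
  forall P : set Z, perfect_set P -> P !=set0 ->
    (S `&` P !=set0) /\ (~` S `&` P !=set0).

(* Main.v *)
Require Import Defs.
From HB Require Import structures.
From mathcomp Require Import all_boot all_order all_algebra.
From mathcomp Require Import all_classical all_reals all_analysis wochoice.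
From mathcomp Require Import lra.
Import Order.TTheory GRing.Theory Num.Theory.
Local Open Scope classical_set_scope.
Set Implicit Arguments. Unset Strict Implicit. Unset Printing Implicit Defensive.

Local Open Scope card_scope.

Lemma cardR_inj (R : realType) T (B : set T) :
  [set: R] #<= B -> exists f : R -> T, injective f /\ (forall r, B (f r)).
Proof.
elim/Ppointed: T B => T B.
  have -> : B = set0 by apply/seteqP; split => x; case: (no x).
  by move=> /card_le0P; rewrite -subset0 => /(_ 0%R I).
move=> /pcard_leP [f]; exists f; split.
  by move=> x y; apply: (@inj _ _ _ f); rewrite ?in_setE.
by move=> r; apply: (@funS _ _ _ _ f).
Qed.

Lemma le_of_inj T U (A : set T) (B : set U) (f : T -> U) :
  {in A &, injective f} -> f @` A `<=` B -> A #<= B.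
Proof.
move=> fi fAB; apply: (@card_le_trans _ _ _ (f @` A)).
  by have := card_esym (inj_card_eq fi); rewrite card_eq_le => /andP[].
exact: subset_card_le.
Qed.

Lemma small_sub (R : realType) T (A B : set T) :
  A `<=` B -> card_lt_c R B -> card_lt_c R A.
Proof. by move=> AB sB hA; apply: sB; apply: card_le_trans hA (subset_card_le AB). Qed.

Lemma small_image (R : realType) T U (f : T -> U) (A : set T) :
  card_lt_c R A -> card_lt_c R (f @` A).
Proof. by move=> sA h; apply: sA; exact: (card_le_trans h (card_image_le f A)). Qed.

Lemma small_inj (R : realType) T U (f : T -> U) (A : set T) (B : set U) :
  {in A &, injective f} -> f @` A `<=` B -> card_lt_c R B -> card_lt_c R A.
Proof. by move=> fi fAB sB h; apply: sB; exact: (card_le_trans h (le_of_inj fi fAB)). Qed.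

Lemma reg_union (R : realType) (Hreg : continuum_regular R) T U (I : set T)
  (e : T -> R) (F : T -> set U) :
  {in I &, injective e} -> card_lt_c R I ->
  (forall i, I i -> card_lt_c R (F i)) ->
  card_lt_c R (\bigcup_(i in I) F i).
Proof.
move=> ei sI sF /cardR_inj [h [hi hU]].
pose G (r : R) : set R := [set s | exists2 i, I i /\ e i = r & F i (h s)].
have sG : forall r, (e @` I) r -> card_lt_c R (G r).
  move=> r [i Ii <-]; apply: (small_inj (f := h) (B := F i)).
  - by move=> x y _ _; apply: hi.
  - move=> _ [s [j [Ij eji] Fjs] <-].
    have -> : i = j by apply: ei; rewrite ?in_setE.
    exact: Fjs.
  - exact: sF.
have := Hreg (e @` I) G (small_image sI) sG.
apply; apply: (@le_of_inj _ _ _ _ id).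
  by move=> x y _ _.
move=> _ [s _ <-]; have [i Ii Fi] := hU s.
by exists (e i); [exists i | exists i].
Qed.

Local Open Scope card_scope.

Lemma R_uncountable (R : realType) : ~ countable [set: R].
Proof.
move=> cR.
have c01 : countable (`[0%R, 1%R]%classic : set R).
  exact: sub_countable (subset_card_le (@subsetT _ _)) cR.
have := countable_lebesgue_measure0 c01.
rewrite lebesgue_measure_itv /= lte_fin ltr01 oppr0 adde0.
by move=> /eqP; rewrite eqe oner_eq0.
Qed.

Lemma countable_small (R : realType) T (A : set T) : countable A -> card_lt_c R A.
Proof. by move=> cA h; apply: (@R_uncountable R); exact: card_le_trans h cA. Qed.

Lemma small_setU (R : realType) (Hreg : continuum_regular R) T (A B : set T) :
  card_lt_c R A -> card_lt_c R B -> card_lt_c R (A `|` B).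
Proof.
move=> sA sB.
have -> : A `|` B = \bigcup_(i in [set: bool]) (if i then A else B).
  apply/seteqP; split=> x.
    by case=> h; [exists true | exists false].
  by case=> -[] _ h; [left | right].
apply: (reg_union Hreg (e := fun b : bool => (b%:R)%R)).
- by move=> [] [] _ _ //= /eqP; rewrite ?oner_eq0 // eq_sym oner_eq0.
- exact: countable_small.
- by move=> [].
Qed.

Lemma big_minus_small (R : realType) (Hreg : continuum_regular R) T (P S : set T) :
  ~ card_lt_c R P -> card_lt_c R S -> ~ card_lt_c R (P `\` S).
Proof.
move=> bP sS sD; apply: bP; apply: small_sub (small_setU Hreg sD sS).
by move=> x Px; have [h|h] := pselect (S x); [right | left].
Qed.

Lemma big_nonempty (R : realType) T (P : set T) : ~ card_lt_c R P -> P !=set0.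
Proof.
move=> bP; apply/set0P/negP => /eqP P0; apply: bP; rewrite P0.
exact: countable_small.
Qed.

Lemma big_two (R : realType) (Hreg : continuum_regular R) T (P : set T) (S : set T) :
  ~ card_lt_c R P -> card_lt_c R S -> exists p q, [/\ P p, P q, ~ S p, ~ S q & p <> q].
Proof.
move=> bP sS.
have [p [Pp Sp]] := big_nonempty (big_minus_small Hreg bP sS).
have sS' : card_lt_c R (S `|` [set p]) by apply: small_setU => //; exact: countable_small.
have [q [Pq Sq]] := big_nonempty (big_minus_small Hreg bP sS').
exists p, q; split => //.
- by move=> h; apply: Sq; left.
- by move=> h; apply: Sq; right.
Qed.

Local Open Scope card_scope.

Lemma wo_exists (R : realType) :
  exists (lt : R -> R -> Prop) (W : set R),
    [/\ well_founded lt,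
        (forall x y, x <> y -> lt x y \/ lt y x),
        (forall w, W w -> card_lt_c R [set v | lt v w]) &
        [set: R] #<= W].
Proof.
have [Rw wo] := well_ordering_principle R.
have refl : forall a, Rw a a.
  move=> a; have [|z [[za zl] _]] := wo [pred z | z == a].
    by exists a; rewrite inE.
  by move: za; rewrite inE => /eqP za; subst z; apply: zl; rewrite inE.
have anti : forall a b, Rw a b -> Rw b a -> a = b.
  move=> a b ab ba.
  have [|z [_ zu]] := wo [pred z | (z == a) || (z == b)].
    by exists a; rewrite inE eqxx.
  have ma : minimum_of Rw [pred z | (z == a) || (z == b)] a.
    split; first by rewrite inE eqxx.
    by move=> x; rewrite inE => /orP[] /eqP ->.
  have mb : minimum_of Rw [pred z | (z == a) || (z == b)] b.
    split; first by rewrite inE eqxx orbT.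
    by move=> x; rewrite inE => /orP[] /eqP ->.
  by rewrite -(zu _ ma) (zu _ mb).
have total : forall a b, Rw a b \/ Rw b a.
  move=> a b; have [|z [[zA zl] _]] := wo [pred z | (z == a) || (z == b)].
    by exists a; rewrite inE eqxx.
  move: zA; rewrite inE => /orP[] /eqP ?; subst z.
    by left; apply: zl; rewrite inE eqxx orbT.
  by right; apply: zl; rewrite inE eqxx.
pose lt x y := Rw x y /\ x <> y.
have wf : well_founded lt.
  move=> a; apply: contrapT => na.
  have [|m [[mN ml] _]] := wo [pred z | ~~ `[< Acc lt z >]].
    by exists a; rewrite inE; apply/asboolPn.
  move: mN; rewrite inE => /asboolPn; apply; constructor => y [ym ny].
  apply: contrapT => ay; apply: ny; apply: anti => //.
  by apply: ml; rewrite inE; apply/asboolPn.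
have tri : forall x y, x <> y -> lt x y \/ lt y x.
  move=> x y xy; case: (total x y) => h; [left | right] => //.
  by split => // /esym.
have [[g Sg]|nS] := pselect (exists w, [set: R] #<= [set v | lt v w]).
  have [|m [[mS ml] _]] := wo [pred w | [set: R] #<= [set v | lt v w]].
    by exists g; rewrite inE; apply/asboolP.
  move: mS; rewrite inE => /asboolP mS.
  exists lt, [set v | lt v m]; split => // w [wm nwm] hw.
  apply: nwm; apply: anti => //; apply: ml; by rewrite inE; apply/asboolP.
exists lt, setT; split => // w _ hw; apply: nS; by exists w.
Qed.

Definition pickd (T : Type) (o0 : T) (P : T -> Prop) : T :=
  match pselect (exists x, P x) with
  | left h => proj1_sig (cid h)
  | right _ => o0
  end.

Lemma pickdP T (o0 : T) (P : T -> Prop) : (exists x, P x) -> P (pickd o0 P).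
Proof.
rewrite /pickd => h; case: pselect => // h'; exact: proj2_sig (cid h').
Qed.

Lemma image_inj_R (R : realType) (T U : Type) (A : set T) (g : T -> U) (enc : T -> R) :
  injective enc -> exists e : U -> R, {in g @` A &, injective e}.
Proof.
move=> ei.
pose e (u : U) : R := match pselect (exists s, A s /\ g s = u) with
  | left h => enc (proj1_sig (cid h)) | right _ => 0%R end.
exists e => u1 u2; rewrite !in_setE => -[s1 h1 e1] [s2 h2 e2].
rewrite /e; case: pselect => [p1|]; last by move=> n; exfalso; apply: n; exists s1.
case: pselect => [p2|]; last by move=> n; exfalso; apply: n; exists s2.
move=> /ei E.
have [_ q1] := proj2_sig (cid p1); have [_ q2] := proj2_sig (cid p2).
by rewrite -q1 -q2 E.
Qed.

Lemma transfinite (R : realType) (Tk Out : Type) (o0 : Out) (enc : Tk -> R)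
  (enc_inj : injective enc) (Good : Tk -> set Out -> Out -> Prop) :
  (forall t (S : set Out), card_lt_c R S ->
     (exists e : Out -> R, {in S &, injective e}) -> exists o, Good t S o) ->
  exists (g : Tk -> Out) (prec : Tk -> Tk -> Prop),
    (forall s t, s <> t -> prec s t \/ prec t s) /\
    (forall t, Good t (g @` [set s | prec s t]) (g t)).
Proof.
move=> hG.
have [lt [W [wf tri segs /cardR_inj [h [hi hW]]]]] := wo_exists R.
pose enc' t := h (enc t).
have enc'i : injective enc' by move=> x y /hi /enc_inj.
pose Sof (w : R) (rec : forall v, lt v w -> Out) : set Out :=
  [set o | exists v (p : lt v w), (exists s, enc' s = v) /\ rec v p = o].
pose step (w : R) (rec : forall v, lt v w -> Out) : Out :=
  pickd o0 (fun o => exists t, enc' t = w /\ Good t (Sof w rec) o).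
have stepE : forall w (f g : forall v, lt v w -> Out),
    (forall v p, f v p = g v p) -> step w f = step w g.
  move=> w f1 f2 e; rewrite /step.
  have -> : Sof w f1 = Sof w f2.
    apply/seteqP; split=> o [v [p [hs <-]]]; exists v, p; split => //.
  done.
pose F : R -> Out := Fix wf (fun _ => Out) step.
have FE : forall w, F w = step w (fun v _ => F v).
  by move=> w; rewrite /F Fix_eq.
exists (fun t => F (enc' t)), (fun s t => lt (enc' s) (enc' t)); split.
  by move=> s t st; apply: tri => /enc'i.
move=> t.
have SE : Sof (enc' t) (fun v _ => F v) =
          (fun s => F (enc' s)) @` [set s | lt (enc' s) (enc' t)].
  apply/seteqP; split.
    move=> o [v [p [[s es] fo]]]; subst v o; exists s => //.
  by move=> o [s hs <-]; exists (enc' s), hs; split => //; exists s.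
rewrite FE /step.
have hEx : exists o, exists t0, enc' t0 = enc' t /\ Good t0 (Sof (enc' t) (fun v _ => F v)) o.
  rewrite SE.
  have [ o hGo] : exists o, Good t ((fun s => F (enc' s)) @` [set s | lt (enc' s) (enc' t)]) o.
    apply: hG.
    - apply: small_image.
      apply: (small_inj (f := enc')) (segs (enc' t) (hW _)).
        by move=> x y _ _; apply: enc'i.
      by move=> _ [s hs <-].
    - exact: image_inj_R _ enc'i.
  by exists o, t; split.
have [t' [/enc'i et' G']] := pickdP o0 hEx.
subst t'; rewrite -SE; exact: G'.
Qed.

Local Open Scope ring_scope.

Definition spl_spec (R : realType) (T : pseudoMetricType R) (P : set T) (c : T) (r eps : R)
  (q : T * T * R) : Prop :=
  [/\ P q.1.1, P q.1.2, 0 < q.2 & q.2 <= eps] /\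
  [/\ ball q.1.1 (2 * q.2) `<=` ball c r, ball q.1.2 (2 * q.2) `<=` ball c r &
      forall z, ball q.1.1 (2 * q.2) z -> ball q.1.2 (2 * q.2) z -> False].

Lemma spl_ex (R : realType) (T : pseudoMetricType R) (P : set T) (c : T) (r eps : R) :
  hausdorff_space T -> P `<=` limit_point P -> P c -> 0 < r -> 0 < eps ->
  exists q, spl_spec P c r eps q.
Proof.
move=> hT lP Pc r0 e0.
have h2 : 0 < r / 2 by lra.
have [y [yc Py By]] := lP c Pc (ball c (r / 2)) (nbhsx_ballx _ _ h2).
have cy : c != y by rewrite eq_sym.
have [[ra rb] /= /eqP H] : exists r : {posnum R} * {posnum R},
    ball c r.1%:num `&` ball y r.2%:num == set0.
  by move: hT; rewrite ball_hausdorff; apply.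
pose m := Num.min (Num.min ra%:num rb%:num) (Num.min (r / 4) eps).
have m0 : 0 < m.
  rewrite /m !lt_min; apply/andP; split; apply/andP; split => //; lra.
have mra : m <= ra%:num by rewrite /m !ge_min lexx.
have mrb : m <= rb%:num by rewrite /m !ge_min lexx orbT.
have mr : m <= r / 4 by rewrite /m !ge_min lexx !orbT.
have me : m <= eps by rewrite /m !ge_min lexx !orbT.
exists (c, y, m / 2); split; split => //=.
- lra.
- lra.
- by apply: le_ball; lra.
- move=> z Byz.
  have hl : r / 2 + 2 * (m / 2) <= r by lra.
  exact: (le_ball hl (ball_triangle By Byz)).
- move=> z B1 B2.
  have l1 : 2 * (m / 2) <= ra%:num by lra.
  have l2 : 2 * (m / 2) <= rb%:num by lra.
  have : (ball c ra%:num `&` ball y rb%:num) z.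
    by split; [exact: (le_ball l1 B1) | exact: (le_ball l2 B2)].
  by rewrite H.
Qed.

Local Open Scope ring_scope.

Definition spl (R : realType) (T : pseudoMetricType R) (P : set T) (c : T) (r eps : R) : T * T * R :=
  pickd (c, c, r) (spl_spec P c r eps).

Fixpoint node (R : realType) (T : pseudoMetricType R) (P : set T) (x0 : T)
  (b : nat -> bool) (n : nat) : T * R :=
  match n with
  | 0 => (x0, 1)
  | n'.+1 => let cr := node P x0 b n' in
             let q := spl P cr.1 cr.2 (n'.+2%:R^-1) in
             (if b n' then q.1.2 else q.1.1, q.2)
  end.

Lemma node_prefix (R : realType) (T : pseudoMetricType R) (P : set T) (x0 : T) n b b' :
  (forall k, (k < n)%N -> b k = b' k) -> node P x0 b n = node P x0 b' n.
Proof.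
elim: n => //= n IH h.
rewrite IH; last by move=> k kn; apply: h; apply: ltnW.
by rewrite h.
Qed.

Section scheme.
Variables (R : realType) (T : pseudoMetricType R) (P : set T) (x0 : T).
Hypotheses (hT : hausdorff_space T) (lP : P `<=` limit_point P) (Px0 : P x0).

Lemma node_inv b n :
  [/\ P (node P x0 b n).1, 0 < (node P x0 b n).2 & (node P x0 b n).2 <= n.+1%:R^-1].
Proof.
elim: n => [|n [Pc r0 _]] /=; first by split => //; rewrite invr1.
have e0 : 0 < n.+2%:R^-1 :> R by rewrite invr_gt0 ltr0n.
have H := @pickdP _ ((node P x0 b n).1, (node P x0 b n).1, (node P x0 b n).2) _ (spl_ex hT lP Pc r0 e0).
destruct H as [[P1 P2 q0 qe] _].
by split => //; case: (b n).
Qed.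

Lemma node_spec b n :
  spl_spec P (node P x0 b n).1 (node P x0 b n).2 (n.+2%:R^-1)
     (spl P (node P x0 b n).1 (node P x0 b n).2 (n.+2%:R^-1)).
Proof.
have [Pc r0 _] := node_inv b n.
have e0 : 0 < n.+2%:R^-1 :> R by rewrite invr_gt0 ltr0n.
exact: pickdP (spl_ex hT lP Pc r0 e0).
Qed.

Lemma node_sub b n m : (n <= m)%N ->
  ball (node P x0 b m).1 (node P x0 b m).2 `<=` ball (node P x0 b n).1 (node P x0 b n).2.
Proof.
elim: m => [|m IH]; first by rewrite leqn0 => /eqP ->.
rewrite leq_eqVlt => /orP[/eqP -> //|]; rewrite ltnS => nm.
apply: subset_trans (IH nm).
have [[_ _ q0 _] [S1 S2 _]] := node_spec b m.
have [_ r0 _] := node_inv b m.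
move=> z /=; set q := spl _ _ _ _ => Bz.
have l : q.2 <= 2 * q.2 by lra.
by case: (b m) Bz => Bz; [apply: S2 | apply: S1]; exact: (le_ball l Bz).
Qed.

End scheme.

Local Open Scope ring_scope.

Section scheme2.
Variables (R : realType) (T : completePseudoMetricType R) (P : set T) (x0 : T).
Hypotheses (hT : hausdorff_space T) (cP : closed P) (lP : P `<=` limit_point P) (Px0 : P x0).

Let s b n := (node P x0 b n).1.
Let r b n := (node P x0 b n).2.

Lemma seq_in b n m : (n <= m)%N -> ball (s b n) (r b n) (s b m).
Proof.
move=> nm; have [_ r0 _] := node_inv hT lP Px0 b m.
exact: (node_sub hT lP Px0 (b:=b) nm (ballxx _ r0)).
Qed.

Lemma seq_cvg b : cvg (s b @ \oo).
Proof.
apply/cauchy_cvgP; apply: cauchy_exP => e e0.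
have [k] := ltr_add_invr e0; rewrite add0r => hk.
exists (s b k); exists k => // m /= km.
have [_ _ rk] := node_inv hT lP Px0 b k.
have l : r b k <= e by apply: le_trans rk (ltW hk).
exact: (le_ball l (seq_in b km)).
Qed.

Definition glim b := lim (s b @ \oo).

Lemma glim_cvg b : s b @ \oo --> glim b.
Proof. exact: seq_cvg. Qed.

Lemma glim_ball b n : ball (s b n) (2 * r b n) (glim b).
Proof.
have [_ r0 _] := node_inv hT lP Px0 b n.
have [N _ hN] := cvg_ball (@glim_cvg b) r0.
have h1 := seq_in b (leq_maxl n N).
have h2 : ball (glim b) (r b n) (s b (maxn n N)) by apply: hN; rewrite /= leq_maxr.
have := ball_triangle h1 (ball_sym h2).
by apply: le_ball; lra.
Qed.

Lemma glim_in b : P (glim b).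
Proof.
apply: (closed_cvg _ cP) (@glim_cvg b).
by apply: nearW => m; have [] := node_inv hT lP Px0 b m.
Qed.

Lemma glim_inj : injective glim.
Proof.
move=> b b' e; apply/funext => k0; apply/eqP; apply: contraT => nb.
have ex : exists k, b k != b' k by exists k0.
case: (ex_minnP ex) => n bn nmin.
have pre : node P x0 b n = node P x0 b' n.
  apply: node_prefix => k kn; apply/eqP; apply: contraT => bk.
  by have := nmin k bk; rewrite leqNgt kn.
have g1 := @glim_ball b n.+1; have g2 := @glim_ball b' n.+1.
rewrite /s /r /= pre in g1; rewrite /s /r /= in g2.
have [_ [_ _ D]] := node_spec hT lP Px0 b' n.
rewrite e in g1.
move: bn g1 g2; case: (b n); case: (b' n) => //= _ g1 g2.
  by case: (D _ g2 g1).
by case: (D _ g1 g2).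
Qed.

End scheme2.

Lemma cantor_inj (R : realType) (T : completePseudoMetricType R) (P : set T) :
  hausdorff_space T -> closed P -> P `<=` limit_point P -> P !=set0 ->
  exists g : (nat -> bool) -> T, injective g /\ (forall b, P (g b)).
Proof.
move=> hT cP lP [x0 Px0].
exists (glim P x0); split; first exact: glim_inj.
exact: glim_in.
Qed.

Import numFieldNormedType.Exports.
Local Open Scope ring_scope.

Lemma R_perfect (R : realType) : [set: R] `<=` limit_point [set: R].
Proof.
move=> x _ U /nbhs_ballP [e /= e0 sU].
exists (x + e / 2); split => //.
  apply/negP => /eqP h; lra.
apply: sU; rewrite /ball /=.
by rewrite opprD addrA subrr add0r normrN ger0_norm; lra.
Qed.

Definition Rcode (R : realType) (x : R) : nat -> bool :=
  fun n => `[< ratr (odflt 0%R (choice.unpickle n)) < x >].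

Lemma Rcode_inj (R : realType) : injective (@Rcode R).
Proof.
have key : forall x y : R, x < y -> Rcode x <> Rcode y.
  move=> x y xy e; have [q] := rat_in_itvoo xy; rewrite in_itv /= => /andP[h1 h2].
  have := congr1 (fun f => f (choice.pickle q)) e; rewrite /Rcode choice.pickleK /=.
  have -> : `[< ratr q < x >] = false by apply/asboolP; lra.
  by have -> : `[< ratr q < y >] = true by apply/asboolP.
move=> x y e; case: (ltgtP x y) => // h; [exact: (False_ind _ (key _ _ h e)) | exact: (False_ind _ (key _ _ h (esym e)))].
Qed.

Lemma C_to_R (R : realType) : exists f : (nat -> bool) -> R, injective f.
Proof.
have [g [gi _]] := @cantor_inj R R setT (@Rhausdorff R) closedT (@R_perfect R) (ex_intro _ 0 I).
by exists g.
Qed.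

Lemma big_perfect (R : realType) (T : completePseudoMetricType R) (P : set T) :
  hausdorff_space T -> closed P -> P `<=` limit_point P -> P !=set0 ->
  ~ card_lt_c R P.
Proof.
move=> hT cP lP P0; have [g [gi gP]] := cantor_inj hT cP lP P0.
apply; apply: (@le_of_inj _ _ _ _ (g \o @Rcode R)).
  by move=> x y _ _ /gi /Rcode_inj.
by move=> _ [x _ <-]; apply: gP.
Qed.

Local Open Scope ring_scope.

Lemma dense_enum (R : realType) (T : completePseudoMetricType R) :
  separable T -> exists dd : nat -> T, forall x : T, forall e : R, 0 < e ->
    exists n, ball x e (dd n).
Proof.
move=> [D [cD dD]].
have [f fi] := countable_injP _ cD.
pose dd n := pickd (point : T) (fun x => D x /\ f x = n).
exists dd => x e e0.
have [|d [Bd Dd]] := dD (ball x e)° _ (open_interior _).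
  by exists x; apply: nbhs_singleton; apply: nbhs_interior; exact: nbhsx_ballx.
exists (f d).
have [Dd' fd] : D (dd (f d)) /\ f (dd (f d)) = f d.
  exact: (@pickdP _ point (fun x => D x /\ f x = f d) (ex_intro _ d (conj Dd erefl))).
have -> : dd (f d) = d by apply: fi; rewrite ?in_setE.
exact: interior_subset Bd.
Qed.

Section polish_basics.
Variables (R : realType) (T : completePseudoMetricType R) (dd : nat -> T).
Hypothesis ddP : forall x : T, forall e : R, 0 < e -> exists n, ball x e (dd n).

Definition bball (nk : nat * nat) : set T := ball (dd nk.1) (nk.2.+1%:R^-1).

Lemma bball_basis (x : T) (e : R) : 0 < e ->
  exists nk, bball nk x /\ bball nk `<=` ball x e.
Proof.
move=> e0; have [k] := ltr_add_invr (ltac:(lra) : 0 < e / 2); rewrite add0r => hk.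
have k0 : 0 < k.+1%:R^-1 :> R by rewrite invr_gt0 ltr0n.
have [n Bn] := ddP x k0.
exists (n, k); split; first exact: ball_sym.
move=> z Bz.
have l : k.+1%:R^-1 + k.+1%:R^-1 <= e.
  by rewrite [X in _ <= X](splitr e); apply: ltW; exact: (ltrD hk hk).
exact: (le_ball l (ball_triangle Bn Bz)).
Qed.

Definition pcode (x : T) : nat * nat -> bool := fun nk => `[< bball nk x >].

Lemma pcode_inj : hausdorff_space T -> injective pcode.
Proof.
move=> hT x y e; apply: contrapT => xy.
have cy : x != y by apply/eqP.
have [[ra rb] /= /eqP H] : exists r : {posnum R} * {posnum R},
    ball x r.1%:num `&` ball y r.2%:num == set0.
  by move: hT; rewrite ball_hausdorff; apply.
have [nk [Bx Bs]] := bball_basis x (gt0 ra).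
have : pcode y nk by rewrite -e; apply/asboolP.
move=> /asboolP /Bs By.
have : (ball x ra%:num `&` ball y rb%:num) y by split => //; exact: ballxx.
by rewrite H.
Qed.

Definition scode (A : set T) : nat * nat -> bool := fun nk => `[< bball nk `&` A !=set0 >].

Lemma scode_inj (A B : set T) : closed A -> closed B -> scode A = scode B -> A = B.
Proof.
have key : forall A B, closed B -> scode A = scode B -> A `<=` B.
  move=> A' B' cB e x Ax; apply: contrapT => nBx.
  have : nbhs x (~` B') by apply: open_nbhs_nbhs; split => //; exact: closed_openC cB.
  move=> /nbhs_ballP [r /= r0 sB].
  have [nk [Bx Bs]] := bball_basis x r0.
  have : scode A' nk by apply/asboolP; exists x.
  rewrite e => /asboolP [z [Bz B'z]].
  exact: sB z (Bs z Bz) B'z.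
move=> cA cB e; apply/seteqP; split; [exact: key | exact: key].
Qed.

End polish_basics.

Local Open Scope ring_scope.

Lemma countable_setU T (A B : set T) : countable A -> countable B -> countable (A `|` B).
Proof.
move=> cA cB.
have -> : A `|` B = \bigcup_(i in [set: bool]) (if i then A else B).
  apply/seteqP; split=> x.
    by case=> h; [exists true | exists false].
  by case=> -[] _ h; [left | right].
by apply: bigcup_countable => // -[].
Qed.

Lemma condensation (R : realType) (T : completePseudoMetricType R) :
  hausdorff_space T -> separable T -> ~ countable [set: T] ->
  exists P : set T, perfect_set P /\ P !=set0.
Proof.
move=> hT sT nc.
have [dd ddP] := dense_enum sT.
pose K := [set x : T | forall e : R, 0 < e -> ~ countable (ball x e)].
have cK : countable (~` K).
  apply: (@sub_countable _ _ _ (\bigcup_(nk in [set nk | countable (bball dd nk)]) bball dd nk)).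
    apply: subset_card_le => x nKx.
    have [e [e0 ce]] : exists e : R, 0 < e /\ countable (ball x e).
      apply: contrapT => h; apply: nKx => e e0 ce; apply: h; by exists e.
    have [nk [Bx Bs]] := bball_basis ddP x e0.
    exists nk => //=.
    exact: sub_countable (subset_card_le Bs) ce.
  by apply: bigcup_countable.
have closedK : closed K.
  rewrite -openC openE => x nKx.
  have [e [e0 ce]] : exists e : R, 0 < e /\ countable (ball x e).
    apply: contrapT => h; apply: nKx => e e0 ce; apply: h; by exists e.
  apply/nbhs_ballP; exists (e / 2) => /=; first lra.
  move=> y By Ky; apply: (Ky (e / 2)); first lra.
  apply: sub_countable ce; apply: subset_card_le => z Bz.
  have l : e / 2 + e / 2 <= e by lra.
  exact: (le_ball l (ball_triangle By Bz)).
have limK : K `<=` limit_point K.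
  move=> x Kx U /nbhs_ballP [e /= e0 sU].
  apply: contrapT => h.
  apply: (Kx e e0).
  apply: (@sub_countable _ _ _ ([set x] `|` ~` K)); last first.
    by apply: countable_setU => //; exact: countable1.
  apply: subset_card_le => y By.
  have [->|yx] := eqVneq y x; first by left.
  right => Ky; apply: h; exists y; split => //; exact: sU.
have K0 : K !=set0.
  apply/set0P/negP => /eqP K0; apply: nc.
  apply: sub_countable cK; apply: subset_card_le => x _; rewrite K0 //.
exists K; split => //; split => //.
apply/seteqP; split => //.
by move=> x /subset_limit_point /closedK.
Qed.

Local Open Scope ring_scope.

Lemma codeR (R : realType) (K : countType) : exists h : (K -> bool) -> R, injective h.
Proof.
have [f fi] := C_to_R R.
pose kc (c : K -> bool) : nat -> bool :=
  fun n => if choice.unpickle n is Some k then c k else false.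
exists (f \o kc) => c1 c2 /fi e; apply/funext => k.
by have := congr1 (fun c => c (choice.pickle k)) e; rewrite /kc /= choice.pickleK.
Qed.

Lemma perfect_big (R : realType) (Hreg : continuum_regular R) (T : completePseudoMetricType R)
  (P : set T) : polish T -> perfect_set P -> P !=set0 -> ~ card_lt_c R P.
Proof.
move=> [hT _] [cP lP] P0; apply: big_perfect => //.
by rewrite lP.
Qed.

Lemma bernstein_partition (R : realType) (Hreg : continuum_regular R)
  (Y : completePseudoMetricType R) :
  polish Y -> exists F : set Y, bernstein F /\ bernstein (~` F).
Proof.
move=> pY; have [hY sY] := pY.
have [dd ddP] := dense_enum sY.
pose Tk := {P : set Y | perfect_set P /\ P !=set0}.
have [h hi] := @codeR R (nat * nat)%type.
pose enc (t : Tk) := h (scode dd (proj1_sig t)).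
have enci : injective enc.
  move=> [P1 p1] [P2 p2] /hi /= e.
  have [[c1 _] _] := p1; have [[c2 _] _] := p2.
  have e' := scode_inj ddP c1 c2 e; subst P2.
  by congr exist; apply: Prop_irrelevance.
pose pts (S : set (Y * Y)) := fst @` S `|` snd @` S.
pose Good (t : Tk) (S : set (Y * Y)) (o : Y * Y) :=
  [/\ proj1_sig t o.1, proj1_sig t o.2, ~ pts S o.1, ~ pts S o.2 & o.1 <> o.2].
have hG : forall t S, card_lt_c R S -> (exists e : Y * Y -> R, {in S &, injective e}) ->
    exists o, Good t S o.
  move=> [P [pP P0]] S sS _.
  have sp : card_lt_c R (pts S).
    by apply: small_setU => //; apply: small_image.
  have [p [q [Pp Pq Sp Sq pq]]] := big_two Hreg (perfect_big Hreg pY pP P0) sp.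
  by exists (p, q).
have [g [prec [tri Gd]]] := @transfinite R Tk (Y * Y)%type (point, point) enc enci Good hG.
pose F := [set y | exists t, (g t).1 = y].
have notF : forall t, ~ F (g t).2.
  move=> t [s gs].
  have [st|st] := pselect (s = t).
    by subst s; have [_ _ _ _] := Gd t; apply.
  case: (tri s t st) => p.
    have [_ _ _ nS _] := Gd t; apply: nS; left; exists (g s) => //; by exists s.
  have [_ _ nS _ _] := Gd s; apply: nS; right; exists (g t) => //; by exists t.
have inF : forall t, F (g t).1 by move=> t; exists t.
exists F; split.
  move=> P pP P0; pose t : Tk := exist _ P (conj pP P0).
  have [P1 P2 _ _ _] := Gd t.
  by split; [exists (g t).1 | exists (g t).2; split => //; apply: notF].
move=> P pP P0; pose t : Tk := exist _ P (conj pP P0).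
have [P1 P2 _ _ _] := Gd t.
split; first by exists (g t).2; split => //; apply: notF.
by exists (g t).1; rewrite setCK; split.
Qed.

Local Open Scope ring_scope.

Lemma fiber_big (R : realType) T U (f : T -> U) (y : U) :
  card_is_c R (f @^-1` [set y]) -> ~ card_lt_c R (f @^-1` [set y]).
Proof.
by move=> h; apply; move: h; rewrite /card_is_c card_eq_sym card_eq_le => /andP[].
Qed.

Lemma Ys_uncountable (R : realType) (Hreg : continuum_regular R) (X Y : Type)
  (Ys : Y -> pointedType) (f : forall a : Y, X -> Ys a) :
  (forall (a : Y) (y : Ys a), card_is_c R (f a @^-1` [set y])) ->
  (forall (a b : Y), a <> b -> forall (y : Ys a) (y' : Ys b),
     card_lt_c R (f a @^-1` [set y] `&` f b @^-1` [set y'])) ->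
  forall a b, a <> b -> ~ countable [set: Ys a].
Proof.
move=> h1 h2 a b ab /countable_injP [c ci].
apply: (fiber_big (h1 b point)).
have -> : f b @^-1` [set point] =
    \bigcup_(y in [set: Ys a]) (f a @^-1` [set y] `&` f b @^-1` [set point]).
  apply/seteqP; split => x.
    by move=> hx; exists (f a x) => //.
  by move=> [y _ [_ hx]].
apply: (reg_union Hreg (e := fun y => (c y)%:R)).
- move=> x y xi yi /eqP; rewrite eqr_nat => /eqP; exact: ci.
- by apply: countable_small; apply/countable_injP; exists c.
- by move=> y _; apply: h2.
Qed.

Local Open Scope ring_scope.

Inductive task (Y : Type) (Ys : Y -> Type) : Type :=
  | TF (a : Y) (y : Ys a)
  | TG (a : Y) (P : set (Ys a)).

Lemma existT_inj2 (Y : Type) (Ys : Y -> Type) (a : Y) (x y : Ys a) :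
  existT Ys a x = existT Ys a y -> x = y.
Proof. exact: Eqdep_dec.inj_pair2_eq_dec (fun u v => pselect (u = v)) Ys a x y. Qed.

Section main.
Variables (R : realType) (Hreg : continuum_regular R) (X Y : completePseudoMetricType R)
  (Ys : Y -> completePseudoMetricType R) (f : forall a : Y, X -> Ys a).
Hypotheses (pY : polish Y) (pYs : forall a, polish (Ys a))
  (h1 : forall (a : Y) (y : Ys a), card_is_c R (f a @^-1` [set y]))
  (h2 : forall (a b : Y), a <> b -> forall (y : Ys a) (y' : Ys b),
     card_lt_c R (f a @^-1` [set y] `&` f b @^-1` [set y'])).
Variables (F : set Y).

Definition valid (t : task Ys) : Prop :=
  match t with
  | TF a y => F a
  | TG a P => ~ F a /\ perfect_set P /\ P !=set0
  end.

Definition Tk := {t : task Ys | valid t}.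
Definition Out := (X * option {a : Y & Ys a})%type.

Definition res (S : set Out) : set {a : Y & Ys a} := [set p | exists2 o, S o & o.2 = Some p].
Definition forb (S : set Out) : set X := [set x | exists p, res S p /\ f (projT1 p) x = projT2 p].

Definition Good (t : Tk) (S : set Out) (o : Out) : Prop :=
  match proj1_sig t with
  | TF a y => [/\ f a o.1 = y, o.2 = None &
               forall p, res S p -> projT1 p <> a -> f (projT1 p) o.1 <> projT2 p]
  | TG a P => exists z, [/\ o.2 = Some (existT _ a z), P z, P (f a o.1) & f a o.1 <> z] /\
               ~ forb S o.1 /\ ~ (f a @` (fst @` S)) z
  end.

Lemma res_small (S : set Out) (a : Y) : card_lt_c R S -> card_lt_c R (res S).
Proof.
move=> sS.
have sub : res S `<=` (fun o : Out => odflt (@existT Y (fun b => Ys b) a point) o.2) @` S.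
  by move=> p [ o So e]; exists o => //; rewrite e.
exact: (small_sub sub (small_image sS)).
Qed.

Lemma res_inj (S : set Out) (e : Out -> R) : {in S &, injective e} ->
  exists e' : {a : Y & Ys a} -> R, {in res S &, injective e'}.
Proof.
move=> ei.
pose pre p := pickd ((point : X), None) (fun o : Out => S o /\ o.2 = Some p).
exists (fun p => e (pre p)) => p1 p2; rewrite !in_setE => r1 r2 E.
have [S1 E1] : S (pre p1) /\ (pre p1).2 = Some p1.
  by case: r1 => o So eo; apply: (@pickdP _ _ (fun o : Out => S o /\ o.2 = Some p1)); exists o.
have [S2 E2] : S (pre p2) /\ (pre p2).2 = Some p2.
  by case: r2 => o So eo; apply: (@pickdP _ _ (fun o : Out => S o /\ o.2 = Some p2)); exists o.
have := ei _ _ (mem_set S1) (mem_set S2) E.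
by move=> EE; move: E1; rewrite EE E2 => -[].
Qed.

Lemma avoid (S : set Out) (a : Y) (y : Ys a) : card_lt_c R S ->
  (exists e : Out -> R, {in S &, injective e}) ->
  exists x, f a x = y /\
    forall p, res S p -> projT1 p <> a -> f (projT1 p) x <> projT2 p.
Proof.
move=> sS [e ei]; have [e' ei'] := res_inj ei.
pose Fam (p : {a : Y & Ys a}) : set X :=
  if pselect (projT1 p = a) then set0
  else (f (projT1 p) @^-1` [set projT2 p] `&` f a @^-1` [set y]).
have sU : card_lt_c R (\bigcup_(p in res S) Fam p).
  apply: (reg_union Hreg ei' (res_small a sS)) => p _.
  rewrite /Fam; destruct (pselect (projT1 p = a)) as [e1|pa].
    exact: countable_small.
  exact: h2.
have [x [fx nU]] := big_nonempty (big_minus_small Hreg (fiber_big (@h1 a y)) sU).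
exists x; split => // p rp pa fp; apply: nU; exists p => //.
by rewrite /Fam; destruct (pselect (projT1 p = a)).
Qed.


Lemma enc_exists : exists enc : Tk -> R, injective enc.
Proof.
have [hY sY] := pY.
have [ddY ddYP] := dense_enum sY.
pose dds a := proj1_sig (cid (dense_enum (pYs a).2)).
have ddsP : forall a, _ := fun a => proj2_sig (cid (dense_enum (pYs a).2)).
pose tcode (t : task Ys) : nat * (nat * nat) -> bool :=
  match t with
  | TF a y => fun i => match i.1 with 0 => true | 1 => pcode ddY a i.2
                        | 2 => pcode (dds a) y i.2 | _ => false end
  | TG a P => fun i => match i.1 with 0 => false | 1 => pcode ddY a i.2
                        | 2 => scode (dds a) P i.2 | _ => false end
  end.
have [h hi] := @codeR R (nat * (nat * nat))%type.
exists (fun t => h (tcode (proj1_sig t))).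
move=> [t1 v1] [t2 v2] /hi /= e.
have e0 := congr1 (fun c => c (0, (0, 0))%N) e.
have e1 : forall nk, tcode t1 (1, nk)%N = tcode t2 (1, nk)%N by move=> nk; rewrite e.
have e2 : forall nk, tcode t1 (2, nk)%N = tcode t2 (2, nk)%N by move=> nk; rewrite e.
suff E : t1 = t2 by subst t2; congr exist; apply: Prop_irrelevance.
clear e; case: t1 v1 e0 e1 e2 => [a1 y1|a1 P1] v1; case: t2 v2 => [a2 y2|a2 P2] v2 //= _ e1 e2.
- have ea : a1 = a2 by apply: (pcode_inj ddYP hY); apply/funext => nk; exact: e1.
  subst a2; congr TF; apply: (pcode_inj (ddsP a1) (pYs a1).1); apply/funext => nk; exact: e2.
- have ea : a1 = a2 by apply: (pcode_inj ddYP hY); apply/funext => nk; exact: e1.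
  subst a2; congr TG; apply: (scode_inj (ddsP a1)).
  + by case: v1 => _ [[]].
  + by case: v2 => _ [[]].
  by apply/funext => nk; exact: e2.
Qed.


Lemma construction (HP : forall a, exists Q : set (Ys a), perfect_set Q /\ Q !=set0) :
  exists A : set X, (forall a, F a -> f a @` A = setT) /\
                    (forall a, ~ F a -> bernstein (f a @` A)).
Proof.
have [enc enci] := enc_exists.
have hG : forall t S, card_lt_c R S -> (exists e : Out -> R, {in S &, injective e}) ->
    exists o, Good t S o.
  move=> [t vt] S sS eS; rewrite /Good /=.
  case: t vt => [a y|a P] vt.
    have [x [fx nx]] := @avoid S a y sS eS.
    by exists (x, None).
  case: vt => nFa [pP P0].
  have bP := perfect_big Hreg (pYs a) pP P0.
  have sZ1 : card_lt_c R (f a @` (fst @` S)) by do 2 apply: small_image.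
  have [z [Pz nz]] := big_nonempty (big_minus_small Hreg bP sZ1).
  pose Za := [set w : Ys a | res S (@existT Y (fun b => Ys b) a w)] `|` [set z].
  have sZa : card_lt_c R Za.
    apply: small_setU => //; last exact: countable_small (countable1 _).
    apply: (small_inj (f := fun w : Ys a => @existT Y (fun b => Ys b) a w) (B := res S)).
    - by move=> w1 w2 _ _ E; apply: existT_inj2 E.
    - by move=> _ [w hw <-].
    - exact: res_small a sS.
  have [y [Py ny]] := big_nonempty (big_minus_small Hreg bP sZa).
  have [x [fx nx]] := @avoid S a y sS eS.
  exists (x, Some (@existT Y (fun b => Ys b) a z)), z; split; [split => // | split => //].
  - by rewrite fx.
  - by rewrite fx => yz; apply: ny; right.
  - move=> [[a' w] [rp fw]] /=; simpl in fw.
    have [ea|na] := pselect (a' = a).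
      subst a'; apply: ny; left; rewrite /= -fx fw; exact: rp.
    exact: nx _ rp na fw.
have [g [prec [tri Gd]]] := @transfinite R Tk Out ((point : X), None) enc enci Good hG.
exists [set x | exists t, (g t).1 = x]; split.
  move=> a Fa; apply/seteqP; split => // y _.
  pose t : Tk := exist _ (@TF _ _ a y) Fa.
  have := Gd t; rewrite /Good /= => -[fy _ _].
  by exists (g t).1 => //; exists t.
move=> a nFa P pP P0.
pose t : Tk := exist _ (@TG _ _ a P) (conj nFa (conj pP P0)).
have := Gd t; rewrite /Good /= => -[z [[gz Pz Pf fz] [nforb nZ]]].
split; first by exists (f a (g t).1); split => //; exists (g t).1 => //; exists t.
exists z; split => //.
move=> [x [s gs] fxz]; subst x.
have [st|st] := pselect (s = t).
  by subst s; exact: fz fxz.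
case: (tri s t st) => p.
  by apply: nZ; exists (g s).1 => //; exists (g s) => //; exists s.
have rp : res [set g x | x in [set s0 | prec s0 s]] (@existT Y (fun b => Ys b) a z).
  by exists (g t) => //; exists t.
have := Gd s; move: rp p fxz; case: s {st} => [s' vs] rp p fxz; rewrite /Good /=.
case: s' vs rp p fxz => [a' y'|a' P'] vs rp p fxz.
  move=> [_ _ hh]; apply: (hh _ rp) => //=.
  by move=> ea; apply: (nFa); rewrite ea.
move=> [z' [_ [nf _]]]; apply: nf; exists (@existT Y (fun b => Ys b) a z); split => //.
Qed.

End main.

Close Scope ring_scope.
Close Scope card_scope.
Local Open Scope classical_set_scope.
Unset Implicit Arguments.

Theorem mainTheorem8 (R : realType) (X Y : completePseudoMetricType R)
  (Ys : Y -> completePseudoMetricType R) (f : forall a : Y, X -> Ys a) :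
  continuum_regular R ->
  polish X -> polish Y -> (forall a : Y, polish (Ys a)) ->
  (forall (a : Y) (y : Ys a), card_is_c R (f a @^-1` [set y])) ->
  (forall (a b : Y), a <> b -> forall (y : Ys a) (y' : Ys b),
     card_lt_c R (f a @^-1` [set y] `&` f b @^-1` [set y'])) ->
  exists (A : set X) (F G : set Y),
    bernstein F /\ bernstein G /\ F `&` G = set0 /\ F `|` G = [set: Y] /\
    F = [set a | f a @` A = [set: Ys a]] /\
    G = [set a | bernstein (f a @` A)].
Proof.
move=> Hreg pX pY pYs h1 h2.
have [HP|nHP] := pselect (forall a, exists Q : set (Ys a), perfect_set Q /\ Q !=set0).
  have [F [bF bG]] := bernstein_partition Hreg pY.
  have [A [hF hG]] := construction Hreg pY pYs h1 h2 F HP.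
  exists A, F, (~` F); split => //; split => //; split; first exact: setICr.
  split; first exact: setUCr.
  split.
    apply/seteqP; split => a /=; first exact: hF.
    move=> fA; apply: contrapT => nFa.
    have [Q [pQ Q0]] := HP a.
    have [_ [y [nA _]]] := hG a nFa Q pQ Q0.
    by apply: nA; rewrite fA.
  apply/seteqP; split => a /=; first exact: hG.
  move=> bA Fa; have [Q [pQ Q0]] := HP a.
  have [_ [y [nA _]]] := bA Q pQ Q0.
  by apply: nA; rewrite hF.
have [a0 na0] : exists a0, ~ exists Q : set (Ys a0), perfect_set Q /\ Q !=set0.
  by apply: contrapT => h; apply: nHP => a; apply: contrapT => ha; apply: h; exists a.
have sub : forall b, b = a0.
  move=> b; apply: contrapT => ba; apply: na0.
  apply: condensation; first exact: (pYs a0).1.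
    exact: (pYs a0).2.
  exact: (Ys_uncountable Hreg h1 h2 (fun e => ba (esym e))).
have noperf : forall P : set Y, perfect_set P -> P !=set0 -> False.
  move=> P [cP lP] [p Pp].
  have : limit_point P p by rewrite lP.
  move=> /(_ setT filterT) [y [yp _ _]].
  by move: yp; rewrite (sub y) (sub p) eqxx.
exists set0, set0, setT; split.
  by move=> P pP P0; case: (noperf P pP P0).
split; first by move=> P pP P0; case: (noperf P pP P0).
split; first exact: set0I.
split; first exact: set0U.
split.
  apply/seteqP; split => a //= E.
  have : (f a @` set0) point by rewrite E.
  by rewrite image_set0.
apply/seteqP; split => a //= _.
have ea := sub a; subst a.
by move=> P pP P0; case: na0; exists P.
Qed.
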